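(* Let $Q=(G\leftleftarrows A)$ be a multiplicative graph with semigroup of vertices $G$. Let $\mathbf k[A]$ be the vector space with basis $A$ and $\mathbf k[G]$ the semigroup algebra, and let $\phi:\mathbf k[A]\to\mathbf k[G]$, $\phi(a)=t(a)-s(a)$. Equip $\mathbf k[A]$ with the $\mathbf k[G]$-bimodule structure extending linearly the two-sided action of $G$ on $A$ given by $\mu$, equip $\mathbf k[G]$ with $\Delta_0(g)=g\otimes g$, and define $\Delta_1:\mathbf k[A]\to\mathbf k[A]\otimes\mathbf k[G]+\mathbf k[G]\otimes\mathbf k[A]$ by $\Delta_1(a)=a\otimes t(a)+s(a)\otimes a$. Then $(\mathbf k[A]\xrightarrow{\phi}\mathbf k[G])$ with these structures is a bialgebra in the Loday–Pirashvili category $\mathcal{LM}$.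
   Context: A multiplicative graph is a directed graph $(G\overset{s}{\underset{t}{\leftleftarrows}}A)$ with an associative morphism $\mu:Q\,\square\,Q\to Q$ from its Cartesian product square (vertices $G\times G$, arrows $A\times G\sqcup G\times A$); this makes $G$ a semigroup and gives left and right actions $g\cdot a=\mu(g,a)$, $a\cdot g=\mu(a,g)$ of $G$ on $A$ with $s(g\cdot a)=gs(a)$, $t(g\cdot a)=gt(a)$, $s(a\cdot g)=s(a)g$, $t(a\cdot g)=t(a)g$. Over a field $\mathbf k$ of characteristic $0$, the category $\mathcal{LM}$ has objects linear maps $U\xrightarrow{f}V$ and morphisms commutative squares, with tensor product $(U\xrightarrow{f}V)\otimes(U'\xrightarrow{f'}V')=(U\otimes V'+V\otimes U'\xrightarrow{f\otimes\mathrm{Id}+\mathrm{Id}\otimes f'}V\otimes V')$. An algebra in $\mathcal{LM}$ is $(\mathcal A\xrightarrow{f}\mathcal H)$ with $\mathcal H$ an algebra, $\mathcal A$ an $\mathcal H$-bimodule and $f$ a bimodule map. A bialgebra in $\mathcal{LM}$ is such an algebra together with a coproduct $\Delta_0$ making $\mathcal H$ a bialgebra and a two-sided coaction $\Delta_1:\mathcal A\to\mathcal A\otimes\mathcal H+\mathcal H\otimes\mathcal A$ which is an $\mathcal H$-bimodule map (with $\mathcal H$ acting on the target via $\Delta_0$) and satisfies $\Delta_0\circ f=(f\otimes\mathrm{Id}+\mathrm{Id}\otimes f)\circ\Delta_1$. *)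

(* Defs.v *)
(* Free vector spaces k[K] on a (choice) type K are modelled
   by multinomials' finitely supported functions {malg k[K]}. *)
From HB Require Import structures.
From mathcomp Require Import all_boot all_algebra.
From mathcomp Require Import finmap.
From mathcomp.multinomials Require Import monalg.

Set Implicit Arguments.
Unset Strict Implicit.
Unset Printing Implicit Defensive.

Import GRing.Theory.
Local Open Scope ring_scope.

(* A directed graph  s,t : A -> G  with an associative morphism        *)
(* mu : Q [] Q -> Q.  On vertices mu is  m : G -> G -> G; on the arrows *)
(* A x G (+) G x A it is given by  r a g = a.g  and  l g a = g.a.       *)
(* mu is a graph morphism (source/target compatibility) and            *)
(* associative on Q [] Q [] Q (vertices G^3, arrows A x G x G (+)      *)
(* G x A x G (+) G x G x A).                                           *)
Definition multiplicative_graph (G A : Type) (s t : A -> G)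
    (m : G -> G -> G) (l : G -> A -> A) (r : A -> G -> A) : Prop :=
  associative m /\
  (forall g a, s (l g a) = m g (s a) /\ t (l g a) = m g (t a)) /\
  (forall a g, s (r a g) = m (s a) g /\ t (r a g) = m (t a) g) /\
  (forall a g h, r (r a g) h = r a (m g h)) /\
  (forall g a h, r (l g a) h = l g (r a h)) /\
  (forall g h a, l (m g h) a = l g (l h a)).

Section FreeSpaces.
Variable k : fieldType.

Notation FV K := {malg k[K]}.

Definition bv (K : choiceType) (x : K) : FV K := << (1 : k) *g x >>.

Definition lin1 (K : choiceType) (V : lmodType k) (h : K -> V) (u : FV K) : V :=
  \sum_(x <- msupp u) u@_x *: h x.

Definition lin2 (K1 K2 : choiceType) (V : lmodType k) (h : K1 -> K2 -> V)
    (u : FV K1) (v : FV K2) : V :=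
  lin1 (fun x => lin1 (fun y => h x y) v) u.

(* k[X] (x) k[Y] is identified with k[X * Y], e_x (x) e_y = e_(x,y) *)
Definition tens (X Y : choiceType) (u : FV X) (v : FV Y) : FV (X * Y)%type :=
  lin2 (fun x y => bv (x, y)) u v.

Definition tmap (X Y X' Y' : choiceType) (F : FV X -> FV X') (H : FV Y -> FV Y')
    : FV (X * Y)%type -> FV (X' * Y')%type :=
  lin1 (fun p => tens (F (bv p.1)) (H (bv p.2))).

(* direct sum k[X] + k[Y] identified with k[X + Y]; a map out of it   *)
Definition smap (X Y : choiceType) (V : lmodType k) (F : FV X -> V) (H : FV Y -> V)
    : FV (X + Y)%type -> V :=
  lin1 (fun p => match p with inl x => F (bv x) | inr y => H (bv y) end).

(* linear map induced by a map of bases (used for canonical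
   identifications such as associativity / distributivity) *)
Definition relabel (K K' : choiceType) (phi : K -> K') : FV K -> FV K' :=
  lin1 (fun x => bv (phi x)).

Definition inl_v (X Y : choiceType) : FV X -> FV (X + Y)%type := relabel inl.
Definition inr_v (X Y : choiceType) : FV Y -> FV (X + Y)%type := relabel inr.

Definition is_linear (V W : lmodType k) (F : V -> W) : Prop :=
  forall (c : k) (u v : V), F (c *: u + v) = c *: F u + F v.

Definition is_bilinear (V1 V2 W : lmodType k) (F : V1 -> V2 -> W) : Prop :=
  (forall v, is_linear (F^~ v)) /\ (forall u, is_linear (F u)).

(* Bialgebras in the Loday--Pirashvili category LM, for objects        *)
(* (U --f--> H) with U = k[Y], H = k[X] free.                          *)
(* Tensor products: (U->H)(x)(U->H) has degree 0 part H(x)H = k[X*X]   *)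
(* and degree 1 part U(x)H + H(x)U = k[(Y*X) + (X*Y)]; the degree 1    *)
(* part of the triple tensor is k[((Y*X)*X + (X*Y)*X) + (X*X)*Y].      *)
(* Algebras are associative, not necessarily unital (G is only a       *)

Section LM.
Variables (X Y : choiceType).

Local Notation H := (FV X).
Local Notation U := (FV Y).
Local Notation HH := (FV (X * X)%type).
Local Notation Q1 := (FV ((Y * X) + (X * Y))%type).
Local Notation HHH := (FV ((X * X) * X)%type).
Local Notation T3 := (FV (((Y * X) * X + (X * Y) * X) + (X * X) * Y)%type).

Record LM_bialgebra
  (mul : H -> H -> H) (lact : H -> U -> U) (ract : U -> H -> U) (f : U -> H)
  (D0 : H -> HH) (D1 : U -> Q1) : Prop := {
  mul_bilin : is_bilinear mul;
  mul_assoc : associative mul;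
  lact_bilin : is_bilinear lact;
  ract_bilin : is_bilinear ract;
  lactM : forall h h' a, lact (mul h h') a = lact h (lact h' a);
  ractM : forall a h h', ract (ract a h) h' = ract a (mul h h');
  lract : forall h a h', ract (lact h a) h' = lact h (ract a h');
  f_lin : is_linear f;
  f_lact : forall h a, f (lact h a) = mul h (f a);
  f_ract : forall a h, f (ract a h) = mul (f a) h;
  D0_lin : is_linear D0;
  D0_coassoc : forall h,
     tmap D0 id (D0 h) =
     relabel (fun p : X * (X * X) => ((p.1, p.2.1), p.2.2)) (tmap id D0 (D0 h));
  D0_mul : forall h h',
     D0 (mul h h') =
     lin2 (fun p q : X * X => tens (mul (bv p.1) (bv q.1)) (mul (bv p.2) (bv q.2)))
          (D0 h) (D0 h');
  (* D1 is a two-sided coaction (coassociativity in degree 1) *)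
  D1_lin : is_linear D1;
  D1_coassoc : forall a : U,
     smap
       (fun w : FV (Y * X)%type =>
          relabel (fun p : ((Y * X) + (X * Y)) * X =>
                     match p with
                     | (inl (y, x), x') => inl (inl ((y, x), x'))
                     | (inr (x, y), x') => inl (inr ((x, y), x'))
                     end : ((Y * X) * X + (X * Y) * X) + (X * X) * Y)
                  (tmap D1 id w))
       (fun w : FV (X * Y)%type =>
          relabel (fun p : (X * X) * Y => inr p : ((Y * X) * X + (X * Y) * X) + (X * X) * Y)
                  (tmap D0 id w))
       (D1 a)
   = smap
       (fun w : FV (Y * X)%type =>
          relabel (fun p : Y * (X * X) =>
                     inl (inl ((p.1, p.2.1), p.2.2)) : ((Y * X) * X + (X * Y) * X) + (X * X) * Y)
                  (tmap id D0 w))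
       (fun w : FV (X * Y)%type =>
          relabel (fun p : X * ((Y * X) + (X * Y)) =>
                     match p with
                     | (x, inl (y, x')) => inl (inr ((x, y), x'))
                     | (x, inr (x', y)) => inr ((x, x'), y)
                     end : ((Y * X) * X + (X * Y) * X) + (X * X) * Y)
                  (tmap id D1 w))
       (D1 a);
  (* D1 is an H-bimodule map, H acting on U(x)H + H(x)U through D0 *)
  D1_lact : forall h a,
     D1 (lact h a) =
     lin2 (fun (p : X * X) (q : (Y * X) + (X * Y)) =>
             match q with
             | inl (y, x) => inl_v _ (tens (lact (bv p.1) (bv y)) (mul (bv p.2) (bv x)))
             | inr (x, y) => inr_v _ (tens (mul (bv p.1) (bv x)) (lact (bv p.2) (bv y)))
             end) (D0 h) (D1 a);
  D1_ract : forall a h,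
     D1 (ract a h) =
     lin2 (fun (q : (Y * X) + (X * Y)) (p : X * X) =>
             match q with
             | inl (y, x) => inl_v _ (tens (ract (bv y) (bv p.1)) (mul (bv x) (bv p.2)))
             | inr (x, y) => inr_v _ (tens (mul (bv x) (bv p.1)) (ract (bv y) (bv p.2)))
             end) (D1 a) (D0 h);
  (* Delta is a morphism in LM:  D0 o f = (f (x) Id + Id (x) f) o D1 *)
  D_f : forall a, D0 (f a) = smap (tmap f id) (tmap id f) (D1 a)
}.

End LM.

Section Graph.
Variables (G A : choiceType) (s t : A -> G)
  (m : G -> G -> G) (l : G -> A -> A) (r : A -> G -> A).

Definition kG_mul : FV G -> FV G -> FV G := lin2 (fun g h => bv (m g h)).
Definition kA_lact : FV G -> FV A -> FV A := lin2 (fun g a => bv (l g a)).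
Definition kA_ract : FV A -> FV G -> FV A := lin2 (fun a g => bv (r a g)).
Definition phi_map : FV A -> FV G := lin1 (fun a => bv (t a) - bv (s a)).
Definition Delta0 : FV G -> FV (G * G)%type := lin1 (fun g => bv (g, g)).
Definition Delta1 : FV A -> FV ((A * G) + (G * A))%type :=
  lin1 (fun a => bv (inl (a, t a)) + bv (inr (s a, a))).

End Graph.

End FreeSpaces.

(* Main.v *)
Require Import Defs.
From HB Require Import structures.
From mathcomp Require Import all_boot all_algebra.
From mathcomp Require Import finmap.
From mathcomp.multinomials Require Import monalg.

Set Implicit Arguments.
Unset Strict Implicit.
Unset Printing Implicit Defensive.
Import GRing.Theory.
Local Open Scope ring_scope.

Section Aux.
Variable k : fieldType.
Local Notation FV K := {malg k[K]}.

Lemma lin1Ew (K : choiceType) (V : lmodType k) (h : K -> V) (u : FV K) (d : {fset K}) :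
  (msupp u `<=` d)%fset -> lin1 h u = \sum_(x <- d) u@_x *: h x.
Proof.
move=> le; rewrite /lin1 [LHS](big_fset_incl _ le) => //= x xd /mcoeff_outdom ->.
by rewrite scale0r.
Qed.

Lemma lin1_lin (K : choiceType) (V : lmodType k) (h : K -> V) : is_linear (lin1 h).
Proof.
move=> c u v.
pose d := (msupp u `|` msupp v `|` msupp (c *: u + v))%fset.
have s1 : (msupp u `<=` d)%fset by rewrite /d -fsetUA fsubsetUl.
have s2 : (msupp v `<=` d)%fset by rewrite /d fsetUC fsetUA fsubsetUr.
have s3 : (msupp (c *: u + v) `<=` d)%fset by rewrite /d fsubsetUr.
rewrite (lin1Ew _ s1) (lin1Ew _ s2) (lin1Ew _ s3) scaler_sumr -big_split /=.
by apply: eq_bigr => x _; rewrite mcoeffD mcoeffZ scalerDl scalerA.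
Qed.

Lemma lin1_bv (K : choiceType) (V : lmodType k) (h : K -> V) (x : K) :
  lin1 h (bv k x) = h x.
Proof.
by rewrite (lin1Ew _ msuppU_le) big_seq_fset1 mcoeffUU scale1r.
Qed.

Lemma lin0 (V W : lmodType k) (F : V -> W) : is_linear F -> F 0 = 0.
Proof.
move=> HF; have := HF 1 0 0; rewrite scaler0 addr0 scale1r.
by move/(congr1 (fun z => z - F 0)); rewrite subrr addrK.
Qed.

Lemma linD (V W : lmodType k) (F : V -> W) : is_linear F -> forall u v, F (u + v) = F u + F v.
Proof. by move=> HF u v; rewrite -[u in LHS]scale1r HF scale1r. Qed.

Lemma linZ (V W : lmodType k) (F : V -> W) : is_linear F -> forall c u, F (c *: u) = c *: F u.
Proof. by move=> HF c u; rewrite -[c *: u]addr0 HF (lin0 HF) addr0. Qed.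

Lemma linN (V W : lmodType k) (F : V -> W) : is_linear F -> forall u, F (- u) = - F u.
Proof. by move=> HF u; rewrite -scaleN1r (linZ HF) scaleN1r. Qed.

Lemma linB (V W : lmodType k) (F : V -> W) : is_linear F -> forall u v, F (u - v) = F u - F v.
Proof. by move=> HF u v; rewrite (linD HF) (linN HF). Qed.

Lemma malgU_bv (K : choiceType) (c : k) (x : K) : << c *g x >> = c *: bv k x.
Proof. by apply/malgP => y; rewrite mcoeffZ !mcoeffU mulr_natr. Qed.

Lemma lin_ext (K : choiceType) (V : lmodType k) (F G : FV K -> V) :
  is_linear F -> is_linear G -> (forall x, F (bv k x) = G (bv k x)) -> forall u, F u = G u.
Proof.
move=> HF HG E u; rewrite (monalgE u).
suff H : forall s : seq K, F (\sum_(x <- s) << u@_x *g x >>) = G (\sum_(x <- s) << u@_x *g x >>) by apply: H.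
elim => [|x s IH]; first by rewrite !big_nil (lin0 HF) (lin0 HG).
by rewrite !big_cons malgU_bv (linD HF) (linD HG) (linZ HF) (linZ HG) E IH.
Qed.

Lemma comp_lin (U V W : lmodType k) (F : V -> W) (G : U -> V) :
  is_linear F -> is_linear G -> is_linear (fun x => F (G x)).
Proof. by move=> HF HG c u v; rewrite HG HF. Qed.

Lemma lin1_ext (K : choiceType) (V : lmodType k) (h1 h2 : K -> V) u :
  (forall x, h1 x = h2 x) -> lin1 h1 u = lin1 h2 u.
Proof. by move=> E; apply: eq_bigr => x _; rewrite E. Qed.

Lemma lin2_linl (K1 K2 : choiceType) (V : lmodType k) (h : K1 -> K2 -> V) v :
  is_linear (fun u => lin2 h u v).
Proof. exact: lin1_lin. Qed.

Lemma lin2_linr (K1 K2 : choiceType) (V : lmodType k) (h : K1 -> K2 -> V) u :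
  is_linear (lin2 h u).
Proof.
move=> c v w; rewrite /lin2.
rewrite (lin1_ext _ (h2 := fun x => c *: lin1 (h x) v + lin1 (h x) w)); last first.
  by move=> x; rewrite lin1_lin.
rewrite /lin1 scaler_sumr -big_split /=.
by apply: eq_bigr => x _; rewrite scalerDr !scalerA mulrC.
Qed.

Lemma lin2_bv (K1 K2 : choiceType) (V : lmodType k) (h : K1 -> K2 -> V) x y :
  lin2 h (bv k x) (bv k y) = h x y.
Proof. by rewrite /lin2 !lin1_bv. Qed.

Lemma lin1D (K : choiceType) (V : lmodType k) (h : K -> V) u v :
  lin1 h (u + v) = lin1 h u + lin1 h v.
Proof. exact: (linD (lin1_lin h)). Qed.
Lemma lin1B (K : choiceType) (V : lmodType k) (h : K -> V) u v :
  lin1 h (u - v) = lin1 h u - lin1 h v.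
Proof. exact: (linB (lin1_lin h)). Qed.
Lemma lin2Dl (K1 K2 : choiceType) (V : lmodType k) (h : K1 -> K2 -> V) u u' v :
  lin2 h (u + u') v = lin2 h u v + lin2 h u' v.
Proof. exact: (linD (lin2_linl h v)). Qed.
Lemma lin2Bl (K1 K2 : choiceType) (V : lmodType k) (h : K1 -> K2 -> V) u u' v :
  lin2 h (u - u') v = lin2 h u v - lin2 h u' v.
Proof. exact: (linB (lin2_linl h v)). Qed.
Lemma lin2Dr (K1 K2 : choiceType) (V : lmodType k) (h : K1 -> K2 -> V) u v v' :
  lin2 h u (v + v') = lin2 h u v + lin2 h u v'.
Proof. exact: (linD (lin2_linr h u)). Qed.
Lemma lin2Br (K1 K2 : choiceType) (V : lmodType k) (h : K1 -> K2 -> V) u v v' :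
  lin2 h u (v - v') = lin2 h u v - lin2 h u v'.
Proof. exact: (linB (lin2_linr h u)). Qed.

Lemma lin1N (K : choiceType) (V : lmodType k) (h : K -> V) u :
  lin1 h (- u) = - lin1 h u.
Proof. exact: (linN (lin1_lin h)). Qed.
Lemma lin2Nl (K1 K2 : choiceType) (V : lmodType k) (h : K1 -> K2 -> V) u v :
  lin2 h (- u) v = - lin2 h u v.
Proof. exact: (linN (lin2_linl h v)). Qed.
Lemma lin2Nr (K1 K2 : choiceType) (V : lmodType k) (h : K1 -> K2 -> V) u v :
  lin2 h u (- v) = - lin2 h u v.
Proof. exact: (linN (lin2_linr h u)). Qed.

End Aux.

Ltac lin := repeat first [ apply: lin1_lin | apply: lin2_linl | apply: lin2_linr | apply: comp_lin ].

Ltac unf := rewrite /kG_mul /kA_lact /kA_ract /phi_map /Delta0 /Delta1 /tmap /smap /relabel /inl_v /inr_v /tens.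

Ltac simp := repeat (rewrite ?lin1_bv ?lin2_bv ?lin1D ?lin1B ?lin2Dl ?lin2Dr ?lin2Bl ?lin2Br ?lin1N ?lin2Nl ?lin2Nr /=).

Theorem mainTheorem7 (k : fieldType) (char0 : [pchar k]%R =i pred0)
    (G A : choiceType) (s t : A -> G)
    (m : G -> G -> G) (l : G -> A -> A) (r : A -> G -> A) :
  multiplicative_graph s t m l r ->
  LM_bialgebra (kG_mul (k:=k) m) (kA_lact (k:=k) l) (kA_ract (k:=k) r)
    (phi_map (k:=k) s t) (Delta0 (k:=k) (G:=G)) (Delta1 (k:=k) s t).
Proof.
move=> [mA [Hl [Hr [rr [lr ll]]]]].
split.
- by split => [v|u]; [apply: lin2_linl | apply: lin2_linr].
- move=> x y z; move: x; apply: lin_ext; unf; lin; move=> a.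
  move: y; apply: lin_ext; unf; lin; move=> b.
  move: z; apply: lin_ext; unf; lin; move=> c.
  by simp; rewrite mA.
- by split => [v|u]; [apply: lin2_linl | apply: lin2_linr].
- by split => [v|u]; [apply: lin2_linl | apply: lin2_linr].
- move=> x y z; move: x; apply: lin_ext; unf; lin; move=> a.
  move: y; apply: lin_ext; unf; lin; move=> b.
  move: z; apply: lin_ext; unf; lin; move=> c.
  by simp; rewrite ll.
- move=> x y z; move: x; apply: lin_ext; unf; lin; move=> a.
  move: y; apply: lin_ext; unf; lin; move=> b.
  move: z; apply: lin_ext; unf; lin; move=> c.
  by simp; rewrite rr.
- move=> x y z; move: x; apply: lin_ext; unf; lin; move=> a.
  move: y; apply: lin_ext; unf; lin; move=> b.
  move: z; apply: lin_ext; unf; lin; move=> c.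
  by simp; rewrite lr.
- exact: lin1_lin.
- move=> x y; move: x; apply: lin_ext; unf; lin; move=> a.
  move: y; apply: lin_ext; unf; lin; move=> b.
  simp; by case: (Hl a b) => -> ->.
- move=> x y; move: x; apply: lin_ext; unf; lin; move=> a.
  move: y; apply: lin_ext; unf; lin; move=> b.
  simp; by case: (Hr a b) => -> ->.
- exact: lin1_lin.
- apply: lin_ext; unf; lin; move=> a.
  by simp.
- move=> x y; move: x; apply: lin_ext; unf; lin; move=> a.
  move: y; apply: lin_ext; unf; lin; move=> b.
  by simp.
- exact: lin1_lin.
- apply: lin_ext; unf; lin; move=> a.
  simp; by rewrite addrA.
- move=> x y; move: x; apply: lin_ext; unf; lin; move=> a.
  move: y; apply: lin_ext; unf; lin; move=> b.
  simp; by case: (Hl a b) => -> ->.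
- move=> x y; move: x; apply: lin_ext; unf; lin; move=> a.
  move: y; apply: lin_ext; unf; lin; move=> b.
  simp; by case: (Hr a b) => -> ->.
- apply: lin_ext; unf; lin; move=> a.
  simp; by rewrite addrA subrK.
Qed.
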